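(* Let $X_3=\{0,1,2\}$ and let $\alpha,\beta:X_3^*\to X_3^*$ be the length-preserving maps defined recursively by $\alpha(\emptyset)=\beta(\emptyset)=\emptyset$ and, for every word $w\in X_3^*$, \[\alpha(0w)=0\alpha(w),\quad \alpha(1w)=1\alpha(w),\quad \alpha(2w)=1\beta(w),\] \[\beta(0w)=1\alpha(w),\quad \beta(1w)=1\beta(w),\quad \beta(2w)=0\beta(w).\] Let $S_L$ be the semigroup of maps $X_3^*\to X_3^*$ generated by $\alpha$ and $\beta$ under composition. Then $S_L$ has the semigroup presentation \[S_L=\langle \alpha,\beta \mid \alpha^2=\alpha,\ \alpha\beta=\beta\rangle,\] i.e. the homomorphism from the semigroup with this presentation to $S_L$ sending the generators to the maps $\alpha,\beta$ is an isomorphism.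
   Context: Composition of maps is performed from right to left: $(\mu\nu)(u)=\mu(\nu(u))$. The maps $\alpha,\beta$ are the states of a finite 3-to-2 transducer (outputs lie in $\{0,1\}^*\subset X_3^*$), regarded here as maps of ternary words. *)

(* Defs.v *)
From Stdlib Require Import List.
Import ListNotations.

Inductive X3 : Type := L0 | L1 | L2.

Fixpoint alpha (w : list X3) : list X3 :=
  match w with
  | [] => []
  | L0 :: w' => L0 :: alpha w'
  | L1 :: w' => L1 :: alpha w'
  | L2 :: w' => L1 :: beta w'
  end
with beta (w : list X3) : list X3 :=
  match w with
  | [] => []
  | L0 :: w' => L1 :: alpha w'
  | L1 :: w' => L1 :: beta w'
  | L2 :: w' => L0 :: beta w'
  end.

Inductive gen : Type := ga | gb.

Definition gen_map (g : gen) : list X3 -> list X3 :=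
  match g with ga => alpha | gb => beta end.

(* Evaluation of a word g1 g2 ... gn over the generators as the composite
   map g1 o g2 o ... o gn (composition right to left: (mu nu)(u) = mu(nu(u))).
   Elements of S_L are exactly the maps eval u for nonempty u. *)
Fixpoint eval (u : list gen) (w : list X3) : list X3 :=
  match u with
  | [] => w
  | g :: u' => gen_map g (eval u' w)
  end.

Inductive cong : list gen -> list gen -> Prop :=
  | cong_rel_aa : cong [ga; ga] [ga]
  | cong_rel_ab : cong [ga; gb] [gb]
  | cong_refl u : cong u u
  | cong_sym u v : cong u v -> cong v u
  | cong_trans u v x : cong u v -> cong v x -> cong u x
  | cong_ctx p q u v : cong u v -> cong (p ++ u ++ q) (p ++ v ++ q).

(* Main.v *)
Require Import Defs.
From Stdlib Require Import List Lia.
Import ListNotations.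

Fixpoint no2 (w : list X3) : Prop :=
  match w with [] => True | L2 :: _ => False | _ :: w' => no2 w' end.

Fixpoint count0 (w : list X3) : nat :=
  match w with [] => 0 | L0 :: w' => S (count0 w') | _ :: w' => count0 w' end.

Lemma no2_ab : forall w, no2 (alpha w) /\ no2 (beta w).
Proof. induction w as [|x w IH]; simpl; auto; destruct x; simpl; tauto. Qed.

Lemma alpha_id : forall w, no2 w -> alpha w = w.
Proof.
  induction w as [|x w IH]; simpl; auto; destruct x; simpl; intros H;
  try rewrite IH; tauto.
Qed.

Lemma beta_01 : forall w, no2 w -> no2 (beta w) /\ count0 (beta w) = count0 w - 1.
Proof.
  induction w as [|x w IH]; simpl; auto; destruct x; simpl; intros H.
  - rewrite alpha_id by auto. split; auto. lia.
  - apply IH; auto.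
  - contradiction.
Qed.

Lemma eval_app : forall p q w, eval (p ++ q) w = eval p (eval q w).
Proof. induction p; simpl; intros; auto; rewrite IHp; auto. Qed.

Lemma sound : forall u v, cong u v -> forall w, eval u w = eval v w.
Proof.
  intros u v H; induction H; intros w; simpl; auto.
  - rewrite alpha_id; auto. apply no2_ab.
  - rewrite alpha_id; auto. apply no2_ab.
  - rewrite IHcong1; auto.
  - rewrite !eval_app, IHcong; auto.
Qed.

Fixpoint countb (u : list gen) : nat :=
  match u with [] => 0 | gb :: u' => S (countb u') | ga :: u' => countb u' end.

Fixpoint endA (u : list gen) : bool :=
  match u with [] => false | [ga] => true | [gb] => false | _ :: u' => endA u' end.

Definition nf u := repeat gb (countb u) ++ (if endA u then [ga] else []).

Lemma eval_01 : forall u w, no2 w -> no2 (eval u w) /\ count0 (eval u w) = count0 w - countb u.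
Proof.
  induction u as [|g u IH]; simpl; intros w H. split; auto; lia.
  destruct (IH w H) as [H1 H2]. destruct g; simpl.
  - rewrite alpha_id; auto.
  - destruct (beta_01 _ H1). split; auto. lia.
Qed.

Lemma no2_rep : forall N, no2 (repeat L0 N) /\ count0 (repeat L0 N) = N.
Proof. induction N; simpl; auto; destruct IHN; split; auto. Qed.

Lemma eval_2 : forall u N, 1 <= N -> u <> [] ->
  no2 (eval u (L2 :: repeat L0 N)) /\
  count0 (eval u (L2 :: repeat L0 N)) = N + 1 - countb u - 2 * (if endA u then 1 else 0).
Proof.
  induction u as [|g u IH]; intros N HN Hne; [congruence|].
  destruct (no2_rep N) as [R1 R2].
  destruct (beta_01 _ R1) as [B1 B2].
  destruct u as [|g' u'].
  - destruct g; simpl alpha; simpl beta; simpl no2; simpl count0; simpl countb; simpl endA; split; auto; lia.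
  - destruct (IH N HN ltac:(discriminate)) as [H1 H2].
    change (eval (g :: g' :: u') (L2 :: repeat L0 N)) with
      (gen_map g (eval (g' :: u') (L2 :: repeat L0 N))).
    assert (EA : endA (g :: g' :: u') = endA (g' :: u')) by (destruct g; reflexivity).
    rewrite EA.
    set (t := eval (g' :: u') (L2 :: repeat L0 N)) in *.
    set (k := countb (g' :: u')) in *.
    destruct g.
    + change (countb (ga :: g' :: u')) with k. simpl gen_map.
      rewrite alpha_id by auto; auto.
    + change (countb (gb :: g' :: u')) with (S k). simpl gen_map.
      destruct (beta_01 _ H1). split; auto. lia.
Qed.

Lemma endA_nonempty : forall u, u <> [] -> countb u = 0 -> endA u = true.
Proof.
  induction u as [|g u IH]; intros H C; [congruence|].
  destruct u as [|g' u']. destruct g; simpl in *; auto; discriminate.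
  destruct g; simpl in C; [|discriminate].
  change (endA (ga :: g' :: u')) with (endA (g' :: u')). apply IH; auto; discriminate.
Qed.

Lemma cong_cons : forall g u v, cong u v -> cong (g :: u) (g :: v).
Proof. intros. apply (cong_ctx [g] [] u v) in H. rewrite !app_nil_r in H. exact H. Qed.

Lemma cong_nf : forall u, u <> [] -> cong u (nf u).
Proof.
  induction u as [|g u IH]; intros Hne; [congruence|].
  destruct u as [|g' u'].
  - destruct g; unfold nf; simpl; apply cong_refl.
  - assert (Hc := cong_cons g _ _ (IH ltac:(discriminate))).
    eapply cong_trans; [exact Hc|].
    destruct g.
    + unfold nf. change (countb (ga :: g' :: u')) with (countb (g' :: u')).
      replace (endA (ga :: g' :: u')) with (endA (g' :: u')) by reflexivity.
      destruct (countb (g' :: u')) eqn:E.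
      * rewrite (endA_nonempty (g' :: u') ltac:(discriminate) E). simpl. apply cong_rel_aa.
      * simpl. exact (cong_ctx [] (repeat gb n ++ (if endA (g' :: u') then [ga] else []))
          [ga; gb] [gb] cong_rel_ab).
    + unfold nf. simpl. apply cong_refl.
Qed.

Theorem mainTheorem1 :
  forall u v : list gen, u <> [] -> v <> [] ->
    ((forall w : list X3, eval u w = eval v w) <-> cong u v).
Proof.
  intros u v Hu Hv; split.
  - intros E.
    assert (Hb : countb u = countb v).
    { pose (N := countb u + countb v).
      destruct (no2_rep N) as [R1 R2].
      destruct (eval_01 u _ R1) as [_ A]. destruct (eval_01 v _ R1) as [_ B].
      rewrite E in A. rewrite A in B. unfold N in *. lia. }
    assert (He : endA u = endA v).
    { pose (N := countb u + 2).
      destruct (eval_2 u N ltac:(lia) Hu) as [_ A]. destruct (eval_2 v N ltac:(lia) Hv) as [_ B].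
      rewrite E in A. rewrite A in B. unfold N in *.
      destruct (endA u), (endA v); auto; lia. }
    assert (Hn : nf u = nf v) by (unfold nf; rewrite Hb, He; auto).
    eapply cong_trans; [apply cong_nf; auto|].
    rewrite Hn. apply cong_sym, cong_nf; auto.
  - intros H. apply sound; auto.
Qed.
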